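(* Let $\Gamma$ be a group and $\rho_i:\Gamma\to GL(V_i)$, $i=1,2$, representations on finite-dimensional complex vector spaces. Assume that (1) each $V_i$ is an irreducible $\Gamma$-module with respect to $\rho_i$; (2) the Zariski-closure of $\rho_1(\Gamma)$ in $GL(V_1)$ is connected; (3) $\rho_2(\Gamma)$ is finite. Then $V_1\otimes V_2$ is an irreducible $\Gamma$-module with respect to $\rho_1\otimes\rho_2$. *)

(* Defs.v *)
(* The complex field C is modelled as R[i] = complex R
   (mathcomp-real-closed) for R : realType (MathComp-Analysis), i.e. R is the
   (unique up to isomorphism) complete archimedean ordered field of reals. *)
From HB Require Import structures.
From mathcomp Require Import all_boot all_order all_algebra.
From mathcomp Require Import reals.
From mathcomp Require Export complex mxtens.
Set Implicit Arguments. Unset Strict Implicit. Unset Printing Implicit Defensive.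
Import GRing.Theory Num.Theory.
Local Open Scope ring_scope.

Definition is_group (G : Type) (mul : G -> G -> G) (one : G) (inv : G -> G) : Prop :=
  [/\ forall x y z, mul x (mul y z) = mul (mul x y) z,
      forall x, mul one x = x,
      forall x, mul x one = x,
      forall x, mul (inv x) x = one
    & forall x, mul x (inv x) = one].

Definition is_rep (F : fieldType) (G : Type) (mul : G -> G -> G) (one : G)
  (n : nat) (rho : G -> 'M[F]_n) : Prop :=
  [/\ forall g, rho g \in unitmx,
      rho one = 1%:M
    & forall g h, rho (mul g h) = rho g *m rho h].

(* Subspaces are encoded by row spaces of square matrices (mxalgebra), with
   matrices acting on row vectors, as in mathcomp's mxrepresentation. *)
Definition rep_irreducible (F : fieldType) (G : Type) (n : nat)
  (rho : G -> 'M[F]_n) : Prop :=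
  (0 < n)%N /\
  forall U : 'M[F]_n, (forall g, (U *m rho g <= U)%MS) -> U == 0 \/ row_full U.

Definition tens_rep (F : fieldType) (G : Type) (n1 n2 : nat)
  (rho1 : G -> 'M[F]_n1) (rho2 : G -> 'M[F]_n2) : G -> 'M[F]_(n1 * n2) :=
  fun g => rho1 g *t rho2 g.

Inductive mxpoly_expr (F : Type) (n : nat) : Type :=
| PVar of 'I_n & 'I_n
| PConst of F
| PAdd of mxpoly_expr F n & mxpoly_expr F n
| PMul of mxpoly_expr F n & mxpoly_expr F n.

Fixpoint peval (F : fieldType) (n : nat) (A : 'M[F]_n) (p : mxpoly_expr F n) : F :=
  match p with
  | PVar i j => A i j
  | PConst c => c
  | PAdd p q => peval A p + peval A q
  | PMul p q => peval A p * peval A q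
  end.

(* Zariski-closed subsets of GL_n(F): common zero loci in GL_n(F) of families
   of polynomials in the entries (regular functions on GL_n are f / det^k, and
   f/det^k vanishes exactly where f does on GL_n). *)
Definition zariski_closed_GL (F : fieldType) (n : nat) (Z : 'M[F]_n -> Prop) : Prop :=
  exists S : mxpoly_expr F n -> Prop,
    forall A, Z A <-> (A \in unitmx /\ forall p, S p -> peval A p = 0).

Definition zariski_closure_GL (F : fieldType) (n : nat) (H : 'M[F]_n -> Prop)
  : 'M[F]_n -> Prop :=
  fun A => A \in unitmx /\
    forall Z, zariski_closed_GL Z -> (forall B, H B -> Z B) -> Z A.

Definition zariski_connected_GL (F : fieldType) (n : nat) (Y : 'M[F]_n -> Prop) : Prop :=
  forall Z1 Z2, zariski_closed_GL Z1 -> zariski_closed_GL Z2 ->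
    (forall A, Y A -> Z1 A \/ Z2 A) ->
    (forall A, Y A -> Z1 A -> Z2 A -> False) ->
    (forall A, Y A -> Z1 A) \/ (forall A, Y A -> Z2 A).

Definition rep_image (F : fieldType) (G : Type) (n : nat) (rho : G -> 'M[F]_n)
  : 'M[F]_n -> Prop := fun A => exists g, A = rho g.

(* Main.v *)
Require Import Defs.
From HB Require Import structures.
From mathcomp Require Import all_boot all_order all_algebra.
From mathcomp Require Import reals complex mxtens.
From Stdlib Require Import Classical.
From mathcomp Require Import zify.
Import GRing.Theory Num.Theory.
Local Open Scope ring_scope.

Section Zar.
Variable F : fieldType.
Variable n : nat.

Definition psumE (T : Type) (s : seq T) (f : T -> mxpoly_expr F n) :=
  foldr (fun k acc => PAdd (f k) acc) (@PConst F n 0) s.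
Arguments psumE {T}.

Lemma peval_psum T (s : seq T) f (A : 'M[F]_n) :
  peval A (psumE s f) = \sum_(k <- s) peval A (f k).
Proof. by elim: s => [|k s IH] /=; rewrite ?big_nil ?big_cons ?IH. Qed.

Lemma closed_ext (Z Z' : 'M[F]_n -> Prop) :
  (forall A, Z A <-> Z' A) -> zariski_closed_GL Z -> zariski_closed_GL Z'.
Proof.
move=> e [S hS]; exists S => A; split.
- by move/e/hS.
- by move/hS/e.
Qed.
Arguments closed_ext {Z Z'}.

Lemma closed_empty : zariski_closed_GL (fun _ : 'M[F]_n => False).
Proof.
exists (fun p => p = @PConst F n 1) => A; split=> [[]|[_ z]].
by have := z _ erefl => /= /eqP; rewrite oner_eq0.
Qed.

Lemma closed_union (Z1 Z2 : 'M[F]_n -> Prop) :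
  zariski_closed_GL Z1 -> zariski_closed_GL Z2 ->
  zariski_closed_GL (fun A => Z1 A \/ Z2 A).
Proof.
move=> [S1 h1] [S2 h2].
exists (fun p => exists p1 p2, S1 p1 /\ S2 p2 /\ p = PMul p1 p2) => A; split.
- case=> [/h1 [uA z]| /h2 [uA z]]; split=> // p [p1 [p2 [s1 [s2 ->]]]] /=.
    by rewrite z // mul0r.
  by rewrite (z p2) // mulr0.
- case=> uA z.
  case: (classic (forall p, S1 p -> peval A p = 0)) => H1.
    by left; apply/h1.
  right; apply/h2; split=> // q sq.
  have [p hp] := not_all_ex_not _ _ H1.
  have [sp np] := imply_to_and _ _ hp.
  have := z (PMul p q) (ex_intro _ p (ex_intro _ q (conj sp (conj sq erefl)))).
  move=> /= /eqP; rewrite mulf_eq0 => /orP [/eqP//|/eqP//].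
Qed.

Arguments closed_union {Z1 Z2}.
Lemma closed_fin (k : nat) (T : nat -> 'M[F]_n -> Prop) :
  (forall i, zariski_closed_GL (T i)) ->
  zariski_closed_GL (fun A => exists i, (i < k)%N /\ T i A).
Proof.
move=> hT; elim: k => [|k IH].
  by apply: closed_ext closed_empty => A; split=> // [[i []]].
apply: closed_ext (closed_union IH (hT k)) => A; split.
- case=> [[i [lt ti]]|tk]; first by exists i; split=> //; apply: ltn_trans lt _.
  by exists k.
- case=> j [hl ti]; move: hl; rewrite ltnS leq_eqVlt => /orP [/eqP ej|hl].
    by right; rewrite -ej.
  by left; exists j.
Qed.

Lemma closed_sub (m p : nat) (U : 'M[F]_(m, n)) (W : 'M[F]_(p, n)) :
  zariski_closed_GL (fun A => A \in unitmx /\ (U *m A <= W)%MS).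
Proof.
set K := cokermx W.
pose e (i : 'I_m) (l : 'I_n) := psumE (index_enum 'I_n) (fun k =>
   PMul (psumE (index_enum 'I_n) (fun j => PMul (@PConst F n (U i j)) (@PVar F n j k)))
        (@PConst F n (K k l))).
have ee A i l : peval A (e i l) = (U *m A *m K) i l.
  rewrite peval_psum mxE. apply eq_bigr => k _ /=.
  rewrite peval_psum mxE; congr (_ * _); rewrite mxE; apply: eq_bigr => j _ //.
exists (fun p => exists i l, p = e i l) => A; split.
- case=> uA; rewrite submxE => /eqP z; split=> // q [i [l ->]].
  by rewrite ee z mxE.
- case=> uA z; split=> //; rewrite submxE; apply/eqP/matrixP => i l.
  by rewrite -ee mxE z //; exists i, l.
Qed.

End Zar.

Lemma fin_cover (F : fieldType) (G : Type) (n2 : nat) (rho2 : G -> 'M[F]_n2) (one : G) :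
  (exists s : seq 'M_n2, forall g, rho2 g \in s) ->
  exists k (f : nat -> G), forall g, exists i, (i < k)%N /\ rho2 (f i) = rho2 g.
Proof.
case=> s hs.
suff [k [f H]] : exists k (f : nat -> G), forall g, rho2 g \in s ->
    exists i, (i < k)%N /\ rho2 (f i) = rho2 g.
  by exists k, f => g; apply: H.
elim: s {hs} => [|M s [k [f IH]]].
  by exists 0%N, (fun _ => one) => g; rewrite in_nil.
case: (classic (exists g0, rho2 g0 = M)) => [[g0 e]|ne].
  exists k.+1, (fun i => if i is i'.+1 then f i' else g0) => g.
  rewrite inE => /orP [/eqP e'|/IH [i [hi ei]]].
    by exists 0%N; split=> //; rewrite e e'.
  by exists i.+1; split.
exists k, f => g; rewrite inE => /orP [/eqP e'|/IH //].
by exfalso; apply: ne; exists g.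
Qed.

Lemma step1 (F : fieldType) (G : Type) (mul : G -> G -> G) (one : G) (inv : G -> G)
  (n1 n2 : nat) (rho1 : G -> 'M[F]_n1) (rho2 : G -> 'M[F]_n2) (k : nat) (f : nat -> G) :
  is_group mul one inv -> is_rep mul one rho1 -> is_rep mul one rho2 ->
  rep_irreducible rho1 ->
  zariski_connected_GL (zariski_closure_GL (rep_image rho1)) ->
  (forall g, exists i, (i < k)%N /\ rho2 (f i) = rho2 g) ->
  forall U : 'M[F]_n1, (forall h, rho2 h = 1%:M -> (U *m rho1 h <= U)%MS) ->
  U == 0 \/ row_full U.
Proof.
move=> [mA m1l m1r mVl mVr] [u1 r1 rM] [u2 r2 rM2] [_ irr] conn hf U HU.
apply: irr => g.
pose T (W : 'M[F]_n1) := fun A : 'M[F]_n1 => A \in unitmx /\ (U *m A <= W)%MS.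
pose Ws i := U *m rho1 (f i).
pose Z1 := T U.
pose Z2 := fun A => exists i, (i < k)%N /\ (~~ (Ws i == U)%MS /\ T (Ws i) A).
have rk g0 : \rank (U *m rho1 g0) = \rank U by rewrite mxrankMfree // row_free_unit.
have cov g0 : exists i, (i < k)%N /\ (U *m rho1 g0 <= Ws i)%MS.
  have [i [hi e]] := hf g0; exists i; split=> //.
  pose h := mul g0 (inv (f i)).
  have eh : rho2 h = 1%:M by rewrite /h rM2 -e -rM2 mVr r2.
  have -> : g0 = mul h (f i) by rewrite /h -mA mVl m1r.
  by rewrite rM mulmxA; apply: submxMr; apply: HU.
have Yimg g0 : zariski_closure_GL (rep_image rho1) (rho1 g0).
  split=> // Z _ hZ; apply: hZ; by exists g0.
have cT W : zariski_closed_GL (T W) by apply: closed_sub.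
have cZ2 : zariski_closed_GL Z2.
  apply: closed_fin => i.
  case: (boolP (Ws i == U)%MS) => b.
    eapply closed_ext; last exact: closed_empty.
    by move=> A; split=> [[]|[nb _]] //; rewrite b in nb.
  eapply closed_ext; last exact: (cT (Ws i)).
  by move=> A; split=> [h|[]].
have key A (W : 'M[F]_n1) : A \in unitmx -> \rank W = \rank U -> (U *m A <= U)%MS ->
    (U *m A <= W)%MS -> (W == U)%MS.
  move=> uA rW s1 s2.
  have rUA : \rank (U *m A) = \rank U by rewrite mxrankMfree // row_free_unit.
  have s3 : (U <= U *m A)%MS by rewrite -(mxrank_leqif_sup s1).2 rUA.
  have s4 : (U <= W)%MS by apply: submx_trans s3 s2.
  have s5 : (W <= U)%MS by rewrite -(mxrank_leqif_sup s4).2 rW.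
  by apply/andP.
have dis A : Z1 A -> Z2 A -> False.
  move=> [uA sU] [i [hi [nW [_ sW]]]].
  by move: nW; rewrite (key A (Ws i)) // rk.
have := conn Z1 Z2 (cT U) cZ2.
case.
- move=> A [uA YA].
  have cl : zariski_closed_GL (fun A => exists i, (i < k)%N /\ T (Ws i) A).
    by apply: closed_fin => i; apply: cT.
  have [i [hi [_ sW]]] : exists i, (i < k)%N /\ T (Ws i) A.
    apply: (YA _ cl) => B [g0 ->].
    have [i [hi si]] := cov g0; exists i; split=> //; split=> //.
  case: (boolP (Ws i == U)%MS) => b.
    left; split=> //; apply: submx_trans sW _; by case/andP: b.
  by right; exists i.
- by move=> A _; apply: dis.
- by move=> H; case: (H _ (Yimg g)).
- move=> H; exfalso; apply: (dis (rho1 one)); last by apply: H.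
  by split; rewrite r1 ?unitmx1 // mulmx1.
Qed.

Section Tens.
Variable F : fieldType.

Lemma tensmxDr m n p q (v : 'M[F]_(m, n)) (w1 w2 : 'M[F]_(p, q)) :
  v *t (w1 + w2) = v *t w1 + v *t w2.
Proof.
apply/matrixP => k l; case: (mxtens_indexP k) => i j; case: (mxtens_indexP l) => a b.
by rewrite [RHS]mxE !tensmxE mxE mulrDr.
Qed.

Lemma tensmx_rv_entry n1 n2 (v : 'rV[F]_n1) (w : 'rV[F]_n2) a b :
  (v *t w) 0 (mxtens_index (a, b)) = v 0 a * w 0 b.
Proof.
have := tensmxE v w 0 0 a b.
have -> : mxtens_index ((0 : 'I_1), (0 : 'I_1)) = (0 : 'I_(1 * 1)) by apply: val_inj.
by [].
Qed.

Variables n1 n2 : nat.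

Definition Cj (j : 'I_n2) : 'M[F]_(n1 * n2, n1) :=
  \matrix_(k, a) ((k == mxtens_index (a, j))%:R).
Definition ej (j : 'I_n2) : 'rV[F]_n2 := delta_mx 0 j.

Lemma mulCj m (x : 'M[F]_(m, n1 * n2)) j r a :
  (x *m Cj j) r a = x r (mxtens_index (a, j)).
Proof.
rewrite mxE (bigD1 (mxtens_index (a, j))) //= big1 => [|k /negbTE nk].
  by rewrite mxE eqxx mulr1 addr0.
by rewrite mxE nk mulr0.
Qed.

Lemma C_tens (v : 'rV[F]_n1) (w : 'rV[F]_n2) j : (v *t w) *m Cj j = w 0 j *: v.
Proof.
by apply/rowP => a; rewrite mulCj tensmx_rv_entry !mxE mulrC.
Qed.

Lemma decomp (x : 'rV[F]_(n1 * n2)) : x = \sum_j (x *m Cj j) *t ej j.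
Proof.
apply/rowP => k; case: (mxtens_indexP k) => a b.
rewrite summxE (bigD1 b) //= big1 => [|j nj].
  by rewrite tensmx_rv_entry mulCj /ej mxE !eqxx mulr1 addr0.
by rewrite tensmx_rv_entry /ej [X in _ * X]mxE eq_sym (negbTE nj) andbF mulr0.
Qed.

Lemma C_mul_tens1 (A : 'M[F]_n1) j :
  (A *t (1%:M : 'M[F]_n2)) *m Cj j = Cj j *m A.
Proof.
apply/matrixP => k a; case: (mxtens_indexP k) => i b.
rewrite mulCj tensmxE [X in _ * X]mxE [RHS]mxE.
case: (b =P j) => [->|nbj].
  rewrite ?eqxx mulr1 (bigD1 i) //= big1 => [|c ci].
    by rewrite mxE eqxx mul1r addr0.
  rewrite mxE (inj_eq (can_inj (@mxtens_indexK _ _))) xpair_eqE eq_sym.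
  by rewrite (negbTE ci) mul0r.
rewrite ?(introF eqP nbj) mulr0 big1 // => c _.
rewrite mxE (inj_eq (can_inj (@mxtens_indexK _ _))) xpair_eqE.
by rewrite (introF eqP nbj) andbF mul0r.
Qed.

End Tens.

Arguments Cj {F n1 n2} j.
Arguments ej {F n2} j.
Arguments decomp {F n1 n2} x.
Arguments C_tens {F n1 n2} v w j.
Arguments C_mul_tens1 {F n1 n2} A j.
Arguments mulCj {F n1 n2 m} x j r a.

Section Step2.
Variables (F : closedFieldType) (n1 n2 : nat) (G : Type).
Variables (rho1 : G -> 'M[F]_n1) (rho2 : G -> 'M[F]_n2).
Hypothesis n1pos : (0 < n1)%N.
Hypothesis HirrH : forall U : 'M[F]_n1,
  (forall h, rho2 h = 1%:M -> (U *m rho1 h <= U)%MS) -> U == 0 \/ row_full U.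
Variable W : 'M[F]_(n1 * n2).
Hypothesis HW : forall g, (W *m (rho1 g *t rho2 g) <= W)%MS.

Definition supp (x : 'rV[F]_(n1 * n2)) := [set j | x *m @Cj F n1 n2 j != 0].

Lemma step2_min (x : 'rV[F]_(n1 * n2)) : (x <= W)%MS -> x != 0 ->
  (forall y, (y <= W)%MS -> y != 0 -> (#|supp x| <= #|supp y|)%N) ->
  exists u : 'rV[F]_n2, u != 0 /\ forall v : 'rV[F]_n1, (v *t u <= W)%MS.
Proof.
move=> xW nx minx.
set S := supp x.
have memS j : (j \in S) = (x *m Cj j != 0) by rewrite inE.
have [j0 j0S] : exists j0, j0 \in S.
  case: (pickP (fun j => j \in S)) => [j0 h|none]; first by exists j0.
  case/eqP: nx; rewrite (decomp x) big1 // => j _.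
  by have := none j; rewrite /= memS => /negbFE/eqP ->; rewrite tens0mx.
pose E := (\bigcap_(j | j \notin S) kermx (@Cj F n1 n2 j))%MS.
pose M := (W :&: E)%MS.
have inM m (y : 'M[F]_(m, n1 * n2)) : (y <= W)%MS ->
    (forall j, j \notin S -> y *m Cj j = 0) -> (y <= M)%MS.
  move=> yW yC; rewrite sub_capmx yW /=; apply/sub_bigcapmxP => j hj.
  by rewrite sub_kermx yC.
have outW m (y : 'M[F]_(m, n1 * n2)) : (y <= M)%MS -> (y <= W)%MS.
  by move=> yM; apply: submx_trans yM (capmxSl _ _).
have outC m (y : 'M[F]_(m, n1 * n2)) j : (y <= M)%MS -> j \notin S -> y *m Cj j = 0.
  move=> yM hj; apply/eqP; rewrite -sub_kermx.
  by move: yM; rewrite sub_capmx => /andP [_ /sub_bigcapmxP H]; apply: H.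
have injM m (y : 'M[F]_(m, n1 * n2)) : (y <= M)%MS -> y *m Cj j0 = 0 -> y = 0.
  move=> yM y0; apply/row_matrixP => r; rewrite row0.
  set z := row r y.
  have zM : (z <= M)%MS by apply: submx_trans (row_sub _ _) yM.
  have z0 : z *m Cj j0 = 0 by rewrite /z -row_mul y0 row0.
  case: (eqVneq z 0) => // nz; exfalso.
  have := minx z (outW _ _ zM) nz.
  have sub : supp z \subset S :\ j0.
    apply/subsetP => j; rewrite /supp inE => nzj; rewrite in_setD1.
    apply/andP; split.
      by apply/eqP => ej; move: nzj; rewrite ej z0 eqxx.
    by apply/negPn/negP => nS; move: nzj; rewrite (outC _ _ _ zM nS) eqxx.
  have := subset_leq_card sub.
  rewrite (cardsD1 j0 S) j0S /=; lia.
have stabM h : rho2 h = 1%:M -> (M *m (rho1 h *t (1%:M : 'M[F]_n2)) <= M)%MS.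
  move=> eh; apply: inM.
    apply: submx_trans (HW h); rewrite eh; apply: submxMr; exact: capmxSl.
  move=> j hj; by rewrite -mulmxA C_mul_tens1 mulmxA (outC _ _ _ (submx_refl M) hj) mul0mx.
have xM : (x <= M)%MS by apply: inM => // j; rewrite memS negbK => /eqP.
have fullMC : row_full (M *m Cj j0).
  case: (HirrH <<M *m Cj j0>>%MS) => [h eh|U0|UF].
  - rewrite (eqmxMr _ (genmxE _)) genmxE -mulmxA -C_mul_tens1 mulmxA.
    by apply: submxMr; apply: stabM.
  - exfalso.
    have : (x *m Cj j0 <= <<M *m Cj j0>>)%MS by rewrite genmxE; apply: submxMr.
    by rewrite (eqP U0) submx0; move: j0S; rewrite memS => /negbTE ->.
  - by move: UF; rewrite -!sub1mx genmxE.
have [L [LC1 LM]] : exists L : 'M[F]_(n1, n1 * n2), L *m Cj j0 = 1%:M /\ (L <= M)%MS.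
  exists (pinvmx (M *m Cj j0) *m M); split; last by apply: submxMl.
  by rewrite -mulmxA; apply: mulVpmx.
have repr m (y : 'M[F]_(m, n1 * n2)) : (y <= M)%MS -> y = y *m Cj j0 *m L.
  move=> yM; apply: subr0_eq; apply: injM.
    apply: addmx_sub yM _; rewrite -scaleN1r; apply: scalemx_sub.
    exact: (submx_trans (submxMl _ _) LM).
  by rewrite mulmxBl -!mulmxA LC1 mulmx1 subrr.
pose Phi j := L *m @Cj F n1 n2 j.
have comm j h : rho2 h = 1%:M -> Phi j *m rho1 h = rho1 h *m Phi j.
  move=> eh.
  have L'M : (L *m (rho1 h *t (1%:M : 'M[F]_n2)) <= M)%MS.
    by apply: submx_trans (submxMr _ LM) (stabM h eh).
  have e1 : L *m (rho1 h *t (1%:M : 'M[F]_n2)) *m Cj j0 = rho1 h.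
    by rewrite -mulmxA C_mul_tens1 mulmxA LC1 mul1mx.
  have e2 : L *m (rho1 h *t (1%:M : 'M[F]_n2)) = rho1 h *m L.
    by rewrite {1}(repr _ _ L'M) e1.
  by rewrite /Phi -mulmxA -C_mul_tens1 !mulmxA e2.
have Schur j : exists c, Phi j = c%:M.
  have [c rc] : exists c, root (char_poly (Phi j)) c.
    by apply/closed_rootP; rewrite size_char_poly eqSS -lt0n.
  rewrite -eigenvalue_root_char /eigenvalue /eigenspace in rc.
  case: (HirrH (kermx (Phi j - c%:M))) => [h eh|K0|KF].
  - rewrite sub_kermx -mulmxA.
    have -> : rho1 h *m (Phi j - c%:M) = (Phi j - c%:M) *m rho1 h.
      by rewrite mulmxBr mulmxBl comm // scalar_mxC.
    by rewrite mulmxA mulmx_ker mul0mx.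
  - by rewrite K0 in rc.
  - exists c; apply/eqP; rewrite -subr_eq0.
    have : (1%:M <= kermx (Phi j - c%:M))%MS by rewrite sub1mx.
    by rewrite sub_kermx mul1mx.
pose i0 := Ordinal n1pos.
pose u := \row_j Phi j i0 i0.
have Phi_u j : Phi j = (u 0 j)%:M.
  have [c e] := Schur j; rewrite e; congr (_%:M).
  by rewrite mxE e mxE eqxx mulr1n.
exists u; split.
- apply/eqP => u0.
  have : u 0 j0 = 1 by rewrite mxE /Phi LC1 mxE eqxx.
  by rewrite u0 mxE => /eqP; rewrite eq_sym oner_eq0.
- move=> v.
  pose y := v *m L.
  have yM : (y <= M)%MS by apply: submx_trans (submxMl _ _) LM.
  suff -> : v *t u = y by apply: outW yM.
  rewrite (decomp (v *t u)) (decomp y); apply: eq_bigr => j _; congr (_ *t _).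
  have e : y *m Cj j = v *m Phi j.
    rewrite {1}(repr _ _ yM) /y -(mulmxA v L (Cj j0)) LC1 mulmx1 mulmxA //.
  by rewrite e C_tens Phi_u mul_mx_scalar.
Qed.

End Step2.

Arguments supp {F n1 n2} x.
Arguments fin_cover {F G n2 rho2} one.
Arguments step1 {F G mul one inv n1 n2 rho1 rho2 k f}.
Arguments step2_min {F n1 n2 G rho1 rho2} n1pos HirrH {W} HW {x}.

Lemma step3 (F : fieldType) (G : Type) (mul : G -> G -> G) (one : G) (inv : G -> G)
  (n1 n2 : nat) (rho1 : G -> 'M[F]_n1) (rho2 : G -> 'M[F]_n2) (k : nat) (f : nat -> G)
  (W : 'M[F]_(n1 * n2)) (u : 'rV[F]_n2) :
  is_group mul one inv -> is_rep mul one rho1 -> is_rep mul one rho2 ->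
  rep_irreducible rho2 ->
  (forall g, exists i, (i < k)%N /\ rho2 (f i) = rho2 g) ->
  (forall g, (W *m (rho1 g *t rho2 g) <= W)%MS) ->
  u != 0 -> (forall v : 'rV[F]_n1, (v *t u <= W)%MS) -> row_full W.
Proof.
move=> [mA m1l m1r mVl mVr] [u1 r1 rM] [u2 r2 rM2] [_ irr2] hf HW nu Pu.
pose P (w : 'rV[F]_n2) := forall v : 'rV[F]_n1, (v *t w <= W)%MS.
have P0 : P 0 by move=> v; rewrite tensmx0 sub0mx.
have PD w1 w2 : P w1 -> P w2 -> P (w1 + w2).
  by move=> h1 h2 v; rewrite tensmxDr addmx_sub.
have PM (b : 'M[F]_1) w : P w -> P (b *m w).
  move=> h v.
  have -> : v *t (b *m w) = ((1%:M : 'M[F]_1) *t b) *m (v *t w).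
    by rewrite tensmx_mul mul1mx.
  exact: submx_trans (submxMl _ _) (h v).
have Prho g w : P w -> P (w *m rho2 g).
  move=> h v.
  have -> : v *t (w *m rho2 g) = (v *m rho1 (inv g) *t w) *m (rho1 g *t rho2 g).
    by rewrite tensmx_mul -mulmxA -rM mVl r1 mulmx1.
  exact: submx_trans (submxMr _ (h _)) (HW g).
pose U2 := (\sum_(i < k) <<u *m rho2 (f i)>>)%MS.
have PU w : (w <= U2)%MS -> P w.
  case/sub_sums_genmxP => a ->.
  apply: (big_ind P) => // i _; apply: PM; apply: Prho; exact: Pu.
have stab g : (U2 *m rho2 g <= U2)%MS.
  rewrite sumsmxMr; apply/sumsmx_subP => i _.
  rewrite (eqmxMr _ (genmxE _)) -mulmxA -rM2.
  have [i' [hi' e]] := hf (mul (f i) g).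
  rewrite -e; apply: (sumsmx_sup (Ordinal hi')) => //.
  by rewrite genmxE.
have uU : (u <= U2)%MS.
  have [i' [hi' e]] := hf one.
  apply: (sumsmx_sup (Ordinal hi')) => //.
  by rewrite genmxE /= e r2 mulmx1.
case: (irr2 U2 stab) => [U0|UF].
  by move: uU; rewrite (eqP U0) submx0 (negbTE nu).
rewrite -sub1mx; apply/row_subP => r.
rewrite (decomp (row r 1%:M)); apply: summx_sub => j _.
apply: (PU (ej j)).
by apply: submx_trans (submx1 _) _; rewrite sub1mx.
Qed.

Arguments step3 {F G mul one inv n1 n2 rho1 rho2 k f W u}.

Theorem lemma4 (R : realType) (G : Type) (mul : G -> G -> G) (one : G) (inv : G -> G)
  (n1 n2 : nat) (rho1 : G -> 'M[R[i]]_n1) (rho2 : G -> 'M[R[i]]_n2) :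
  is_group mul one inv ->
  is_rep mul one rho1 -> is_rep mul one rho2 ->
  rep_irreducible rho1 -> rep_irreducible rho2 ->
  zariski_connected_GL (zariski_closure_GL (rep_image rho1)) ->
  (exists s : seq 'M[R[i]]_n2, forall g, rho2 g \in s) ->
  rep_irreducible (tens_rep rho1 rho2).
Proof.
move=> grp rep1 rep2 irr1 irr2 conn fin.
have [k [f hf]] := fin_cover one fin.
have HirrH := step1 grp rep1 rep2 irr1 conn hf.
case: (irr1) => n1pos _; case: (irr2) => n2pos _.
split; first by rewrite muln_gt0 n1pos n2pos.
move=> W HW.
case: (eqVneq W 0) => [->|nW]; [by left | right].
have [r nr] : exists r, row r W != 0.
  case: (pickP (fun r => row r W != 0)) => [r h|none]; first by exists r.
  case/eqP: nW; apply/row_matrixP => r; rewrite row0.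
  by have := none r => /negbFE/eqP.
have HW' g : (W *m (rho1 g *t rho2 g) <= W)%MS := HW g.
suff [u [nu Pu]] : exists u : 'rV[R[i]]_n2, u != 0 /\
    forall v : 'rV[R[i]]_n1, (v *t u <= W)%MS.
  exact: step3 grp rep1 rep2 irr2 hf HW' nu Pu.
suff H : forall N (x : 'rV[R[i]]_(n1 * n2)), (#|supp x| <= N)%N ->
    (x <= W)%MS -> x != 0 -> exists u : 'rV[R[i]]_n2, u != 0 /\
    forall v : 'rV[R[i]]_n1, (v *t u <= W)%MS.
  exact: H _ (row r W) (leqnn _) (row_sub _ _) nr.
elim=> [|N IH] x hN xW nx;
  case: (classic (exists y, (y <= W)%MS /\ y != 0 /\ (#|supp y| < #|supp x|)%N))
    => [[y [yW [ny hy]]]|nomin].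
- by move: hN; rewrite leqn0 => /eqP h; rewrite h in hy.
- apply: (step2_min n1pos HirrH HW' xW nx) => y yW ny.
  by rewrite leqNgt; apply/negP => hy; apply: nomin; exists y.
- by apply: (IH y) => //; rewrite -ltnS; apply: leq_trans hy hN.
- apply: (step2_min n1pos HirrH HW' xW nx) => y yW ny.
  by rewrite leqNgt; apply/negP => hy; apply: nomin; exists y.
Qed.
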